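(* Fix $\phi\in\mathbb{R}^d$ with $\mu=\|\phi\|^2>0$, a one-hot label ${\bm y}\in\{0,1\}^V$, softmax cross-entropy $f({\bm z},{\bm y})=-\sum_k y_k\log p_k({\bm z})$, $\kappa\ge 0$, $|\eta|\in(0,1]$, $|\rho|\le\kappa\sqrt{|\eta|}$, and set $\eta'=\eta\mu$. Given ${\bm W}^t$, let ${\bm z}^t={\bm W}^t\phi$, ${\bm p}^t=\mathrm{softmax}({\bm z}^t)$, ${\bm g}^t={\bm p}^t-{\bm y}$, ${\bm H}^t_{{\bm z}}=\mathrm{diag}({\bm p}^t)-{\bm p}^t({\bm p}^t)^\top$, $\tilde\rho^{\,t}=\rho\sqrt\mu/\|{\bm g}^t\|$ ($0$ if ${\bm g}^t=0$). With $F({\bm W})=f({\bm W}\phi,{\bm y})$, let the GD update be ${\bm W}^{t+1}(\mathrm{GD})={\bm W}^t-\eta\nabla F({\bm W}^t)$ and the SAM update be ${\bm W}^{t+1}(\mathrm{SAM})={\bm W}^t-\eta\nabla F({\bm W}^t+\rho\nabla F({\bm W}^t)/\|\nabla F({\bm W}^t)\|)$ (perturbation $0$ if ${\bm g}^t=0$), let ${\bm p}^{t+1}(a)=\mathrm{softmax}({\bm W}^{t+1}(a)\phi)$ and $\alpha_i^{(a)}=p_i^{t+1}(a)/p_i^t$ for $a\in\{\mathrm{GD},\mathrm{SAM}\}$, $i\in[V]$. Then for each $i$, $$\alpha_i^{(a)}=\frac{\sum_{j=1}^V e^{z_j^t}}{\sum_{j=1}^V\beta_j^{(a)}e^{z_j^t}},$$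 where $\beta_j^{\mathrm{GD}}=\exp\{-\eta'[(p_j^t-y_j)-(p_i^t-y_i)]\}$ and $$\beta_j^{\mathrm{SAM}}=\beta_j^{\mathrm{GD}}\cdot\exp\{-\eta'\tilde\rho^{\,t}\Delta^t_{j,i}\}\cdot\exp\{r_j^t-r_i^t\},\qquad \Delta^t_{j,i}=({\bm H}^t_{{\bm z}}{\bm g}^t)_j-({\bm H}^t_{{\bm z}}{\bm g}^t)_i,$$ with ${\bm r}^t={\bm W}^{t+1}(\mathrm{SAM})\phi-{\bm z}^t+\eta'({\bm g}^t+\tilde\rho^{\,t}{\bm H}^t_{{\bm z}}{\bm g}^t)$; and there is a constant $C_1>0$ depending only on $(L,\mu,\kappa)$ (where $L$ is a uniform bound on the norms of the first three ${\bm z}$-derivatives of $f$) such that $e^{-2C_1\eta^2}\le\exp\{r_j^t-r_i^t\}\le e^{2C_1\eta^2}$ for all $i,j$.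
   Context: $\|\cdot\|$ is Euclidean/Frobenius norm. $\nabla F({\bm W})=({\bm p}({\bm W}\phi)-{\bm y})\phi^\top$. *)

(* Defs.v *)
From HB Require Import structures.
From mathcomp Require Import all_boot all_order all_algebra.
From mathcomp Require Import all_classical all_reals all_analysis.
Set Implicit Arguments. Unset Strict Implicit. Unset Printing Implicit Defensive.
Import Order.TTheory GRing.Theory Num.Theory.
Import numFieldNormedType.Exports.
Local Open Scope ring_scope.

Section Defs.
Variable R : realType.

Definition enorm (m n : nat) (A : 'M[R]_(m, n)) : R :=
  Num.sqrt (\sum_(i < m) \sum_(j < n) A i j ^+ 2).

Definition softmax (V : nat) (z : 'cV[R]_V) : 'cV[R]_V :=
  \col_i (expR (z i 0) / \sum_(j < V) expR (z j 0)).

Definition xent (V : nat) (z y : 'cV[R]_V) : R :=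
  - \sum_(k < V) y k 0 * ln (softmax z k 0).

Definition one_hot (V : nat) (y : 'cV[R]_V) : Prop :=
  exists k : 'I_V, forall i : 'I_V, y i 0 = (i == k)%:R.

Definition gradF (V d : nat) (phi : 'cV[R]_d) (y : 'cV[R]_V) (W : 'M[R]_(V, d))
  : 'M[R]_(V, d) := (softmax (W *m phi) - y) *m phi^T.

Definition Hz (V : nat) (p : 'cV[R]_V) : 'M[R]_V :=
  diag_mx p^T - p *m p^T.

Definition W_GD (V d : nat) (phi : 'cV[R]_d) (y : 'cV[R]_V) (eta : R)
  (W : 'M[R]_(V, d)) : 'M[R]_(V, d) := W - eta *: gradF phi y W.

Definition W_SAM (V d : nat) (phi : 'cV[R]_d) (y : 'cV[R]_V) (eta rho : R)
  (W : 'M[R]_(V, d)) : 'M[R]_(V, d) :=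
  let G := gradF phi y W in
  let g := softmax (W *m phi) - y in
  let pert := if g == 0 then 0 else (rho / enorm G) *: G in
  W - eta *: gradF phi y (W + pert).

Definition rho_tilde (V : nat) (rho mu : R) (g : 'cV[R]_V) : R :=
  if g == 0 then 0 else rho * Num.sqrt mu / enorm g.

(* L uniformly bounds the norms of the first three derivatives of
   z |-> f(z, y) (norms of the 1-, 2-, 3-linear forms, i.e. sup over
   Euclidean-unit directions of the directional derivatives). *)
Definition xent_deriv_bound (V : nat) (y : 'cV[R]_V) (L : R) : Prop :=
  let f := fun z : 'cV[R]_V => xent z y in
  forall (z u v w : 'cV[R]_V),
    enorm u = 1 -> enorm v = 1 -> enorm w = 1 ->
    [/\ `| 'D_u f z | <= L,
        `| 'D_v ('D_u f) z | <= L
      & `| 'D_w ('D_v ('D_u f)) z | <= L].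

End Defs.

(* Main.v *)
Require Import Defs.
From HB Require Import structures.
From mathcomp Require Import all_boot all_order all_algebra.
From mathcomp Require Import all_classical all_reals all_analysis.
From mathcomp Require Import ring lra.
Import Order.TTheory GRing.Theory Num.Theory.
Import numFieldNormedType.Exports.
Set Implicit Arguments. Unset Strict Implicit.
Local Open Scope ring_scope.

Section H.
Variable R : realType.

Lemma exp_quad (x : R) : `|x| <= 1/2 -> 0 <= expR x - 1 - x <= 2 * x^+2.
Proof.
move=> hx.
have h1 := expR_ge1Dx x.
have h2 := expR_ge1Dx (- x).
have h3 : expR x * expR (-x) = 1 by rewrite -expRD subrr expR0.
have hp := expR_gt0 x.
have hb : - (1/2) <= x <= 1/2 by rewrite -ler_norml.
case/andP: hb => hb1 hb2.
apply/andP; split; first lra.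
have h4 : expR x * (1 - x) <= 1.
  by rewrite -h3; apply: ler_wpM2l; [lra | lra].
nra.
Qed.

Lemma sumexp_pos V (z : 'cV[R]_V) (i : 'I_V) : 0 < \sum_(j < V) expR (z j 0).
Proof.
rewrite (bigD1 i) //=; apply: ltr_pwDl; first exact: expR_gt0.
by apply: sumr_ge0 => j _; apply/ltW/expR_gt0.
Qed.

Lemma softmax_pos V (z : 'cV[R]_V) (i : 'I_V) : 0 < softmax z i 0.
Proof. by rewrite mxE divr_gt0 // ?expR_gt0 // (sumexp_pos z i). Qed.

Lemma softmax_sum V (z : 'cV[R]_V) (i : 'I_V) : \sum_(k < V) softmax z k 0 = 1.
Proof.
under eq_bigr do rewrite mxE.
rewrite -mulr_suml divff //; exact/lt0r_neq0/(sumexp_pos z i).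
Qed.

Lemma softmax_le1 V (z : 'cV[R]_V) (i : 'I_V) : softmax z i 0 <= 1.
Proof.
rewrite -(softmax_sum z i) (bigD1 i) //= lerDl.
by apply: sumr_ge0 => j _; apply/ltW/softmax_pos.
Qed.

Lemma ratio_lemma V (z z' : 'cV[R]_V) (i : 'I_V) (b : 'I_V -> R) :
  (forall j, b j = expR ((z' j 0 - z j 0) - (z' i 0 - z i 0))) ->
  softmax z' i 0 / softmax z i 0 =
  (\sum_(j < V) expR (z j 0)) / (\sum_(j < V) b j * expR (z j 0)).
Proof.
move=> hb.
have e : \sum_(j < V) b j * expR (z j 0) =
   (\sum_(j < V) expR (z' j 0)) * expR (z i 0 - z' i 0).
  rewrite mulr_suml; apply: eq_bigr => j _; rewrite hb -!expRD; congr expR.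
  ring.
rewrite e !mxE.
have h1 := sumexp_pos z i; have h2 := sumexp_pos z' i.
have h3 : expR (z i 0 - z' i 0) * expR (z' i 0) = expR (z i 0).
  by rewrite -expRD; congr expR; ring.
rewrite -h3.
have := expR_gt0 (z i 0 - z' i 0); have := expR_gt0 (z' i 0) => ha hc.
field.
by rewrite !lt0r_neq0.
Qed.


Lemma softmax_taylor V (z dl : 'cV[R]_V) (c : R) (j : 'I_V) :
  (forall k, `|dl k 0| <= c) ->
  `|softmax (z + dl) j 0 - softmax z j 0 -
     softmax z j 0 * (dl j 0 - \sum_(k < V) softmax z k 0 * dl k 0)| <= 16 * c ^+ 2.
Proof.
move=> hc.
pose p : 'I_V -> R := fun k => softmax z k 0.
set m := \sum_(k < V) p k * dl k 0.
set E := \sum_(k < V) p k * expR (dl k 0).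
have hp k : 0 < p k by exact: softmax_pos.
have hp1 k : p k <= 1 by exact: softmax_le1.
have hps : \sum_(k < V) p k = 1 by exact: softmax_sum.
have c0 : 0 <= c by apply: le_trans (hc j).
have hm : `|m| <= c.
  apply: le_trans (ler_norm_sum _ _ _) _.
  apply: le_trans (_ : \sum_(k < V) p k * c <= _); last by rewrite -mulr_suml hps mul1r.
  apply: ler_sum => k _; rewrite normrM ger0_norm; last exact: ltW.
  by apply: ler_wpM2l; [exact: ltW|].
have hE0 : 0 < E.
  rewrite /E (bigD1 j) //=; apply: ltr_pwDl; first by apply: mulr_gt0; [|exact: expR_gt0].
  by apply: sumr_ge0 => k _; apply: mulr_ge0; [exact: ltW| exact/ltW/expR_gt0].
have hq : softmax (z + dl) j 0 = p j * expR (dl j 0) / E.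
  have e1 : \sum_(k < V) expR ((z + dl) k 0) =
            (\sum_(k < V) expR (z k 0)) * E.
    rewrite /E mulr_sumr; apply: eq_bigr => k _; rewrite /p !mxE expRD.
    have := sumexp_pos z j => hs.
    by field; rewrite lt0r_neq0.
  rewrite [softmax (z + dl) j 0]mxE e1 /p mxE mxE expRD.
  have := sumexp_pos z j => hs.
  by field; rewrite !lt0r_neq0.
rewrite hq; change (softmax z j 0) with (p j).
have hdj := hc j.
have hdj' : - c <= dl j 0 <= c by rewrite -ler_norml.
case/andP: hdj' => hd1 hd2.
have hm' : - c <= m <= c by rewrite -ler_norml.
case/andP: hm' => hm1 hm2.
have hpj := hp j; have hpj1 := hp1 j.
have hej := expR_gt0 (dl j 0).
case: (lerP c (1/2)) => hc2; last first.
  set q := p j * expR (dl j 0) / E.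
  have hq01 : 0 <= q <= 1.
    rewrite /q -hq; apply/andP; split; [exact/ltW/softmax_pos| exact: softmax_le1].
  case/andP: hq01 => hq0 hq1.
  have hpd : `|p j * (dl j 0 - m)| <= 2 * c.
    rewrite normrM (gtr0_norm hpj).
    have : `|dl j 0 - m| <= 2 * c.
      by apply: le_trans (ler_normB _ _) _; lra.
    have := normr_ge0 (dl j 0 - m); nra.
  move: hpd; set u := p j * (dl j 0 - m).
  have hcc : 2 + 2 * c <= 16 * c ^+ 2.
    have : 0 <= (c - 1/2) * (c - 1/2) by apply: mulr_ge0; lra.
    rewrite expr2; nra.
  rewrite !ler_norml => /andP[u1 u2]; apply/andP; split; lra.
pose a : 'I_V -> R := fun k => expR (dl k 0) - 1 - dl k 0.
have ha k : 0 <= a k <= 2 * c ^+ 2.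
  have hk := hc k.
  have := exp_quad (le_trans hk hc2); case/andP => h1 h2.
  apply/andP; split => //; apply: le_trans h2 _.
  have hk2 : - c <= dl k 0 <= c by rewrite -ler_norml.
  case/andP: hk2 => hk1 hk2; nra.
set A := \sum_(k < V) p k * a k.
have hA : 0 <= A <= 2 * c ^+ 2.
  apply/andP; split.
    by apply: sumr_ge0 => k _; apply: mulr_ge0; [exact: ltW| case/andP: (ha k)].
  apply: le_trans (_ : \sum_(k < V) p k * (2 * c ^+ 2) <= _); last by rewrite -mulr_suml hps mul1r.
  apply: ler_sum => k _; apply: ler_wpM2l; [exact: ltW| by case/andP: (ha k)].
have hEe : E = 1 + m + A.
  rewrite /E /m /A -hps -!big_split /=; apply: eq_bigr => k _; rewrite /a; ring.
have hexj : expR (dl j 0) = 1 + dl j 0 + a j by rewrite /a; ring.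
rewrite hexj hEe.
case/andP: (ha j) => ha1 ha2.
case/andP: hA => hA1 hA2.
set N := a j - A - dl j 0 * m - dl j 0 * A + m ^+ 2 + m * A.
have hE1 : 1/2 <= 1 + m + A by lra.
have eN : p j * (1 + dl j 0 + a j) / (1 + m + A) - p j - p j * (dl j 0 - m)
          = p j * N / (1 + m + A).
  rewrite /N; field; apply: lt0r_neq0; lra.
rewrite eN.
have hN : `|N| <= 8 * c ^+ 2.
  rewrite /N ler_norml; apply/andP; split; nra.
rewrite normrM normfV (gtr0_norm (_ : 0 < 1 + m + A)); last lra.
rewrite normrM (gtr0_norm hpj).
rewrite ler_pdivrMr; last lra.
have hN0 := normr_ge0 N.
nra.
Qed.


Lemma enorm_col2 n (v : 'cV[R]_n) : enorm v ^+ 2 = \sum_(k < n) v k 0 ^+ 2.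
Proof.
rewrite /enorm sqr_sqrtr; last by apply: sumr_ge0 => i _; apply: sumr_ge0 => j _; exact: sqr_ge0.
by apply: eq_bigr => i _; rewrite big_ord1.
Qed.

Lemma norm_entry n (v : 'cV[R]_n) k : `|v k 0| <= enorm v.
Proof.
rewrite -sqrtr_sqr /enorm ler_sqrt; last by apply: sumr_ge0 => i _; apply: sumr_ge0 => j _; exact: sqr_ge0.
rewrite (bigD1 k) //= big_ord1 lerDl.
by apply: sumr_ge0 => i _; apply: sumr_ge0 => j _; exact: sqr_ge0.
Qed.

Lemma gradF_phi V d (phi : 'cV[R]_d) (y : 'cV[R]_V) (W : 'M[R]_(V, d)) :
  gradF phi y W *m phi = (enorm phi ^+ 2) *: (softmax (W *m phi) - y).
Proof.
rewrite /gradF -mulmxA.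
have -> : phi^T *m phi = (enorm phi ^+ 2)%:M.
  apply/matrixP => a b; rewrite !ord1 !mxE /= enorm_col2 mulr1n.
  by apply: eq_bigr => k _; rewrite mxE expr2.
by rewrite mul_mx_scalar.
Qed.

Lemma enorm_outer V d (g : 'cV[R]_V) (phi : 'cV[R]_d) :
  enorm (g *m phi^T) = enorm g * enorm phi.
Proof.
have h : enorm (g *m phi^T) ^+ 2 = (enorm g * enorm phi) ^+ 2.
  rewrite exprMn !enorm_col2 /enorm sqr_sqrtr; last first.
    by apply: sumr_ge0 => i _; apply: sumr_ge0 => j _; exact: sqr_ge0.
  rewrite mulr_suml; apply: eq_bigr => i _; rewrite mulr_sumr.
  apply: eq_bigr => j _; rewrite !mxE big_ord1 !mxE exprMn //.
have h1 : 0 <= enorm (g *m phi^T) by exact: sqrtr_ge0.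
have h2 : 0 <= enorm g * enorm phi by apply: mulr_ge0; exact: sqrtr_ge0.
by move/eqP: h; rewrite eqf_sqr => /orP[/eqP //|/eqP e]; move: h1; rewrite e; nra.
Qed.

Lemma Hg_entry V (p g : 'cV[R]_V) j :
  (Hz p *m g) j 0 = p j 0 * g j 0 - p j 0 * \sum_(k < V) p k 0 * g k 0.
Proof.
rewrite /Hz mulmxBl mul_diag_mx -mulmxA !mxE big_ord1 !mxE.
congr (_ - _ * _); apply: eq_bigr => k _; by rewrite !mxE.
Qed.


Lemma zSAM V d (phi : 'cV[R]_d) (y : 'cV[R]_V) (eta rho : R) (W : 'M[R]_(V, d)) :
  let mu := enorm phi ^+ 2 in
  let g := softmax (W *m phi) - y in
  W_SAM phi y eta rho W *m phi =
  W *m phi - (eta * mu) *: (softmax (W *m phi + rho_tilde rho mu g *: g) - y).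
Proof.
move=> mu g.
rewrite /W_SAM /rho_tilde -/g mulmxBl -scalemxAl gradF_phi scalerA -/mu.
case: ifP => /eqP hg; first by rewrite addr0 scale0r addr0.
rewrite mulmxDl -scalemxAl gradF_phi -/mu -/g scalerA.
have -> : rho / enorm (gradF phi y W) * mu = rho * Num.sqrt mu / enorm g; last by [].
rewrite /gradF -/g enorm_outer /mu sqrtr_sqr ger0_norm; last exact: sqrtr_ge0.
set a := enorm g; set b := enorm phi.
have [->|bn0] := eqVneq b 0; first by rewrite expr2 !mulr0 mul0r.
rewrite invfM; set u := a^-1; field; exact: bn0.
Qed.


Lemma entry_subZ n (a b : 'cV[R]_n) c k : (a - c *: b) k 0 = a k 0 - c * b k 0.
Proof. by rewrite !mxE. Qed.
Lemma entry_sub n (a b : 'cV[R]_n) k : (a - b) k 0 = a k 0 - b k 0.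
Proof. by rewrite !mxE. Qed.
Lemma entry_add n (a b : 'cV[R]_n) k : (a + b) k 0 = a k 0 + b k 0.
Proof. by rewrite !mxE. Qed.
Lemma entry_Z n (b : 'cV[R]_n) c k : (c *: b) k 0 = c * b k 0.
Proof. by rewrite !mxE. Qed.

Lemma entry_N n (b : 'cV[R]_n) k : (- b) k 0 = - b k 0.
Proof. by rewrite !mxE. Qed.

End H.
Unset Implicit Arguments.

Theorem lemma2 (R : realType) (L mu kappa : R) :
  0 < mu -> 0 <= kappa ->
  exists C1 : R, 0 < C1 /\
  forall (V d : nat) (phi : 'cV[R]_d) (y : 'cV[R]_V) (eta rho : R)
         (W : 'M[R]_(V, d)),
    enorm phi ^+ 2 = mu ->
    one_hot y ->
    xent_deriv_bound y L ->
    0 < `|eta| <= 1 ->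
    `|rho| <= kappa * Num.sqrt `|eta| ->
    let eta' := eta * mu in
    let z := W *m phi in
    let p := softmax z in
    let g := p - y in
    let H := Hz p in
    let rt := rho_tilde rho mu g in
    let p_GD := softmax (W_GD phi y eta W *m phi) in
    let p_SAM := softmax (W_SAM phi y eta rho W *m phi) in
    let r := W_SAM phi y eta rho W *m phi - z + eta' *: (g + rt *: (H *m g)) in
    let beta_GD := fun i j : 'I_V =>
      expR (- eta' * ((p j 0 - y j 0) - (p i 0 - y i 0))) in
    let Delta := fun j i : 'I_V => (H *m g) j 0 - (H *m g) i 0 in
    let beta_SAM := fun i j : 'I_V =>
      beta_GD i j * expR (- eta' * rt * Delta j i) * expR (r j 0 - r i 0) in
    (forall i : 'I_V,
       p_GD i 0 / p i 0 =
         (\sum_(j < V) expR (z j 0)) / (\sum_(j < V) beta_GD i j * expR (z j 0))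
     /\ p_SAM i 0 / p i 0 =
         (\sum_(j < V) expR (z j 0)) / (\sum_(j < V) beta_SAM i j * expR (z j 0)))
    /\ (forall i j : 'I_V,
          expR (- (2 * C1 * eta ^+ 2)) <= expR (r j 0 - r i 0)
          /\ expR (r j 0 - r i 0) <= expR (2 * C1 * eta ^+ 2)).
Proof.
move=> mu0 k0.
have hK : 0 <= 16 * mu ^+ 2 * kappa ^+ 2.
  by apply: mulr_ge0; [apply: mulr_ge0 => //; exact: sqr_ge0| exact: sqr_ge0].
exists (16 * mu ^+ 2 * kappa ^+ 2 + 1); split; first lra.
move=> V d phi y eta rho W hmu _ _ heta hrho eta' z p g H rt p_GD p_SAM r
  beta_GD Delta beta_SAM.
have gE j : g j 0 = p j 0 - y j 0 by rewrite /g !mxE.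
have hzGD : W_GD phi y eta W *m phi = z - eta' *: g.
  by rewrite /W_GD mulmxBl -scalemxAl gradF_phi hmu scalerA.
have hzS : W_SAM phi y eta rho W *m phi = z - eta' *: (softmax (z + rt *: g) - y).
  by have := zSAM phi y eta rho W; rewrite /= hmu.
split.
  move=> i; split.
    apply: ratio_lemma => j; rewrite /beta_GD hzGD !entry_subZ -!gE; congr expR; ring.
  apply: ratio_lemma => j; rewrite /beta_SAM /beta_GD /Delta -!expRD; congr expR.
  rewrite /r !(entry_add, entry_sub, entry_Z, entry_N); ring.
set c := `|rho| * Num.sqrt mu.
have hc k : `|(rt *: g) k 0| <= c.
  rewrite entry_Z normrM /rt /rho_tilde.
  case: ifP => _; first by rewrite normr0 mul0r /c mulr_ge0 // sqrtr_ge0.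
  set eg := enorm g.
  have eg0 : 0 <= eg by exact: sqrtr_ge0.
  have hgk : `|g k 0| <= eg by exact: norm_entry.
  rewrite normrM normfV normrM (ger0_norm eg0) (ger0_norm (sqrtr_ge0 mu)).
  have c0 : 0 <= `|rho| * Num.sqrt mu by rewrite mulr_ge0 // sqrtr_ge0.
  have [->|egn0] := eqVneq eg 0; first by rewrite invr0 mulr0 mul0r.
  have egp : 0 < eg by rewrite lt_def egn0 eg0.
  rewrite -mulrA mulrC -mulrA ler_pdivrMl //= mulrC -/c [c * _]mulrC; exact: ler_wpM2r.

have hc2 : c ^+ 2 <= kappa ^+ 2 * `|eta| * mu.
  rewrite /c exprMn sqr_sqrtr ?(ltW mu0) //; apply: ler_wpM2r; first exact: ltW.
  have e1 := sqr_sqrtr (normr_ge0 eta).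
  have h1 := normr_ge0 rho; have h2 := sqrtr_ge0 `|eta|.
  rewrite -e1 -exprMn !expr2; have h3 := mulr_ge0 k0 h2; nra.

have rE j : r j 0 = - eta' * (softmax (z + rt *: g) j 0 - p j 0 -
    p j 0 * ((rt *: g) j 0 - \sum_(k < V) p k 0 * (rt *: g) k 0)).
  have sE : \sum_(k < V) p k 0 * (rt *: g) k 0 = rt * \sum_(k < V) p k 0 * g k 0.
    by rewrite mulr_sumr; apply: eq_bigr => k _; rewrite entry_Z; ring.
  rewrite sE /r hzS /H !(entry_add, entry_sub, entry_Z, entry_N) Hg_entry ?gE; ring.
have T j := softmax_taylor z j hc.
have hr i j : `|r j 0 - r i 0| <= 32 * mu ^+ 2 * kappa ^+ 2 * eta ^+ 2.
  rewrite !rE -mulrBr normrM normrN /eta' normrM (gtr0_norm mu0).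
  have hd := le_trans (ler_normB _ _) (lerD (T j) (T i)).
  set D := `|_ - _| in hd *.
  have D0 : 0 <= D by exact: normr_ge0.

  have he := normr_ge0 eta.
  have e2 : eta ^+ 2 = `|eta| ^+ 2 by rewrite real_normK // num_real.
  rewrite e2.
  have hc2' : 32 * c ^+ 2 <= 32 * (kappa ^+ 2 * `|eta| * mu) by lra.
  have : `|eta| * mu * D <= `|eta| * mu * (32 * (kappa ^+ 2 * `|eta| * mu)).
    apply: ler_wpM2l; first by apply: mulr_ge0 => //; exact: ltW.
    lra.
  move=> h; apply: le_trans h _; rewrite le_eqVlt; apply/orP; left; apply/eqP; ring.
move=> i j.
have := hr i j; rewrite ler_norml => /andP[h1 h2].
have e3 : 0 <= eta ^+ 2 by exact: sqr_ge0.
rewrite !ler_expR; split; nra.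
Qed.
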